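(* Let $A$ (in $\mathcal H$) and $B$ (in $\mathcal K$) be closed densely defined operators such that $A\dashv B$ via a (possibly unbounded) intertwining operator $T_{AB}$ and $B\dashv A$ via a (possibly unbounded) intertwining operator $T_{BA}$, and assume that both $T_{AB}^{-1}$ and $T_{BA}^{-1}$ are everywhere defined and bounded. Then $\sigma_p(A)=\sigma_p(B)$, $\rho(A)=\rho(B)$, and hence $\sigma(A)=\sigma(B)$.
   Context: A closed densely defined operator $T:D(T)\subseteq\mathcal H\to\mathcal K$ is an intertwining operator for $A$ and $B$ if $D(A)\subseteq D(T)$ and $AD(A)\subseteq D(T)$, $TD(A)\subseteq D(B)$, and $BT\xi=TA\xi$ for all $\xi\in D(A)$. $A\dashv B$ means there is such an intertwining operator that is injective with densely defined inverse. $\rho(A)$ is the set of $\lambda$ with $A-\lambda I$ injective and $(A-\lambda I)^{-1}$ bounded everywhere defined; $\sigma(A)=\mathbb C\setminus\rho(A)$; $\sigma_p$ is the set of eigenvalues. *)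

(* Defs.v *)
From Stdlib Require Import Reals.
Open Scope R_scope.

Record C := mkC { re : R; im : R }.
Definition C0 : C := mkC 0 0.
Definition C1 : C := mkC 1 0.
Definition Cadd (a b : C) : C := mkC (re a + re b) (im a + im b).
Definition Cmul (a b : C) : C :=
  mkC (re a * re b - im a * im b) (re a * im b + im a * re b).
Definition Cconj (a : C) : C := mkC (re a) (- im a).

Definition dist_of {V : Type} (add : V -> V -> V) (opp : V -> V)
  (inner : V -> V -> C) (x y : V) : R :=
  sqrt (re (inner (add x (opp y)) (add x (opp y)))).

Record Hilbert := {
  car :> Type;
  vadd : car -> car -> car;
  vzero : car;
  vopp : car -> car;
  vscal : C -> car -> car;
  inner : car -> car -> C;
  vaddA : forall x y z, vadd x (vadd y z) = vadd (vadd x y) z;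
  vaddC : forall x y, vadd x y = vadd y x;
  vadd0 : forall x, vadd x vzero = x;
  vaddN : forall x, vadd x (vopp x) = vzero;
  vscal1 : forall x, vscal C1 x = x;
  vscalA : forall a b x, vscal a (vscal b x) = vscal (Cmul a b) x;
  vscalDr : forall a x y, vscal a (vadd x y) = vadd (vscal a x) (vscal a y);
  vscalDl : forall a b x, vscal (Cadd a b) x = vadd (vscal a x) (vscal b x);
  innerD : forall x y z, inner (vadd x y) z = Cadd (inner x z) (inner y z);
  innerZ : forall a x y, inner (vscal a x) y = Cmul a (inner x y);
  inner_conj : forall x y, inner y x = Cconj (inner x y);
  inner_pos : forall x, 0 <= re (inner x x);
  inner_def : forall x, inner x x = C0 -> x = vzero;
  complete : forall u : nat -> car,
    (forall eps, eps > 0 -> exists N, forall m n, (N <= m)%nat -> (N <= n)%nat ->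
        dist_of vadd vopp inner (u m) (u n) < eps) ->
    exists l, forall eps, eps > 0 -> exists N, forall n, (N <= n)%nat ->
        dist_of vadd vopp inner (u n) l < eps
}.

Arguments vadd {h}. Arguments vzero {h}. Arguments vopp {h}.
Arguments vscal {h}. Arguments inner {h}.

Definition hnorm {H : Hilbert} (x : H) : R := sqrt (re (inner x x)).
Definition hsub {H : Hilbert} (x y : H) : H := vadd x (vopp y).
Definition hdist {H : Hilbert} (x y : H) : R := hnorm (hsub x y).

Definition converges {H : Hilbert} (u : nat -> H) (l : H) : Prop :=
  forall eps, eps > 0 -> exists N, forall n, (N <= n)%nat -> hdist (u n) l < eps.

Definition dense {H : Hilbert} (S : H -> Prop) : Prop :=
  forall x eps, eps > 0 -> exists d, S d /\ hdist x d < eps.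

(** * (Possibly unbounded) operators D(T) ⊆ H -> K.
    An operator is a domain predicate together with a function; the values
    of [app] outside [dom] are irrelevant. *)
Record op (H K : Hilbert) := mkOp { dom : H -> Prop; app : H -> K }.
Arguments mkOp {H K}. Arguments dom {H K}. Arguments app {H K}.

Definition linear_op {H K : Hilbert} (T : op H K) : Prop :=
  dom T vzero /\
  (forall x y, dom T x -> dom T y -> dom T (vadd x y)) /\
  (forall a x, dom T x -> dom T (vscal a x)) /\
  (forall x y, dom T x -> dom T y -> app T (vadd x y) = vadd (app T x) (app T y)) /\
  (forall a x, dom T x -> app T (vscal a x) = vscal a (app T x)).

Definition densely_defined {H K : Hilbert} (T : op H K) : Prop := dense (dom T).

Definition closed_op {H K : Hilbert} (T : op H K) : Prop :=
  forall (u : nat -> H) x y, (forall n, dom T (u n)) ->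
    converges u x -> converges (fun n => app T (u n)) y ->
    dom T x /\ app T x = y.

Definition closed_dd_operator {H K : Hilbert} (T : op H K) : Prop :=
  linear_op T /\ closed_op T /\ densely_defined T.

Definition op_injective {H K : Hilbert} (T : op H K) : Prop :=
  forall x y, dom T x -> dom T y -> app T x = app T y -> x = y.

(** range of T = domain of T^{-1} *)
Definition range {H K : Hilbert} (T : op H K) (y : K) : Prop :=
  exists x, dom T x /\ app T x = y.

Definition inverse_densely_defined {H K : Hilbert} (T : op H K) : Prop :=
  dense (range T).

(** for injective T: T^{-1} (defined on range T by T^{-1}(T x) = x) is
    everywhere defined and bounded *)
Definition inverse_bounded_everywhere {H K : Hilbert} (T : op H K) : Prop :=
  (forall y, range T y) /\
  exists M, 0 <= M /\ forall x, dom T x -> hnorm x <= M * hnorm (app T x).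

Definition intertwining {H K : Hilbert} (A : op H H) (B : op K K) (T : op H K) : Prop :=
  closed_dd_operator T /\
  (forall x, dom A x -> dom T x) /\
  (forall x, dom A x -> dom T (app A x)) /\
  (forall x, dom A x -> dom B (app T x)) /\
  (forall x, dom A x -> app B (app T x) = app T (app A x)).

Definition dashv_via {H K : Hilbert} (A : op H H) (B : op K K) (T : op H K) : Prop :=
  intertwining A B T /\ op_injective T /\ inverse_densely_defined T.

Definition dashv {H K : Hilbert} (A : op H H) (B : op K K) : Prop :=
  exists T, dashv_via A B T.

Definition shift {H : Hilbert} (A : op H H) (lam : C) : op H H :=
  mkOp (dom A) (fun x => hsub (app A x) (vscal lam x)).

Definition resolvent_set {H : Hilbert} (A : op H H) (lam : C) : Prop :=
  op_injective (shift A lam) /\ inverse_bounded_everywhere (shift A lam).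

Definition spectrum {H : Hilbert} (A : op H H) (lam : C) : Prop :=
  ~ resolvent_set A lam.

Definition point_spectrum {H : Hilbert} (A : op H H) (lam : C) : Prop :=
  exists x, dom A x /\ x <> vzero /\ app A x = vscal lam x.

(* Main.v *)
Require Import Defs.
From Stdlib Require Import Reals.
From Stdlib Require Import Lra Psatz Classical IndefiniteDescription ZArith.
Require Import Defs.
Open Scope R_scope.

Lemma C_ext (a b : C) : re a = re b -> im a = im b -> a = b.
Proof. destruct a, b; simpl; intros; subst; reflexivity. Qed.

Definition rs (r : R) : C := mkC r 0.



Lemma add0l {H : Hilbert} (x : H) : vadd vzero x = x.
Proof. rewrite vaddC; apply vadd0. Qed.
Lemma addNl {H : Hilbert} (x : H) : vadd (vopp x) x = vzero.
Proof. rewrite vaddC; apply vaddN. Qed.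
Lemma addKl {H : Hilbert} (x y : H) : vadd (vopp x) (vadd x y) = y.
Proof. rewrite vaddA, addNl; apply add0l. Qed.
Lemma add_cancel_l {H : Hilbert} (x y z : H) : vadd x y = vadd x z -> y = z.
Proof. intros E. rewrite <- (addKl x y), E; apply addKl. Qed.
Lemma opp_unique {H : Hilbert} (x y : H) : vadd x y = vzero -> vopp x = y.
Proof. intros E. rewrite <- (addKl x y), E, vadd0; reflexivity. Qed.
Lemma oppK {H : Hilbert} (x : H) : vopp (vopp x) = x.
Proof. apply opp_unique, addNl. Qed.
Lemma oppD {H : Hilbert} (x y : H) : vopp (vadd x y) = vadd (vopp x) (vopp y).
Proof. apply opp_unique.
  rewrite (vaddC _ (vopp x)), vaddA, <- (vaddA _ x y), vaddN, vadd0, vaddN; reflexivity. Qed.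
Lemma opp0 {H : Hilbert} : vopp (@vzero H) = vzero.
Proof. apply opp_unique, vadd0. Qed.
Lemma scal0 {H : Hilbert} (x : H) : vscal C0 x = vzero.
Proof. assert (E : vscal C0 x = vadd (vscal C0 x) (vscal C0 x)).
  { rewrite <- vscalDl. f_equal. apply C_ext; simpl; ring. }
  symmetry. apply (add_cancel_l (vscal C0 x)). rewrite vadd0. exact E. Qed.
Lemma scalx0 {H : Hilbert} a : vscal a (@vzero H) = vzero.
Proof. assert (E : vscal a (@vzero H) = vadd (vscal a vzero) (vscal a vzero)).
  { rewrite <- vscalDr, vadd0; reflexivity. }
  symmetry. apply (add_cancel_l (vscal a vzero)). rewrite vadd0. exact E. Qed.
Lemma oppE {H : Hilbert} (x : H) : vopp x = vscal (rs (-1)) x.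
Proof. apply opp_unique. rewrite <- (vscal1 _ x) at 1. rewrite <- vscalDl.
  rewrite <- (scal0 x). f_equal. apply C_ext; unfold C1, C0, rs; simpl; ring. Qed.
Lemma scalA_comm {H : Hilbert} a b (x : H) : vscal a (vscal b x) = vscal b (vscal a x).
Proof. rewrite !vscalA. f_equal. apply C_ext; destruct a, b; simpl; ring. Qed.
Lemma scal_opp {H : Hilbert} a (x : H) : vscal a (vopp x) = vopp (vscal a x).
Proof. rewrite !oppE. apply scalA_comm. Qed.
Lemma hsubD {H : Hilbert} (a b c d : H) :
  hsub (vadd a b) (vadd c d) = vadd (hsub a c) (hsub b d).
Proof. unfold hsub. rewrite oppD. rewrite <- !vaddA. f_equal.
  rewrite !vaddA. rewrite (vaddC _ b). reflexivity. Qed.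
Lemma hsub_scal {H : Hilbert} a (x y : H) : vscal a (hsub x y) = hsub (vscal a x) (vscal a y).
Proof. unfold hsub. rewrite vscalDr, scal_opp. reflexivity. Qed.
Lemma hsub_self {H : Hilbert} (x : H) : hsub x x = vzero.
Proof. apply vaddN. Qed.
Lemma hsub0 {H : Hilbert} (x : H) : hsub x vzero = x.
Proof. unfold hsub; rewrite opp0; apply vadd0. Qed.
Lemma hsub_opp {H : Hilbert} (x y : H) : hsub x y = vopp (hsub y x).
Proof. unfold hsub. rewrite oppD, oppK, vaddC. reflexivity. Qed.
Lemma hsub_chain {H : Hilbert} (x y z : H) : hsub x z = vadd (hsub x y) (hsub y z).
Proof. unfold hsub. rewrite <- vaddA, (vaddA _ (vopp y)), addNl, add0l. reflexivity. Qed.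
Lemma hsub_eq0 {H : Hilbert} (x y : H) : hsub x y = vzero -> x = y.
Proof. unfold hsub; intros E. rewrite <- (oppK y). symmetry. apply opp_unique.
  rewrite vaddC; exact E. Qed.

Definition ip {H : Hilbert} (x y : H) : R := re (inner x y).
Lemma ip_sym {H : Hilbert} (x y : H) : ip x y = ip y x.
Proof. unfold ip. rewrite (inner_conj _ x y). destruct (inner x y); reflexivity. Qed.
Lemma ipDl {H : Hilbert} (x y z : H) : ip (vadd x y) z = ip x z + ip y z.
Proof. unfold ip. rewrite innerD. reflexivity. Qed.
Lemma ipDr {H : Hilbert} (x y z : H) : ip z (vadd x y) = ip z x + ip z y.
Proof. rewrite !(ip_sym z). apply ipDl. Qed.
Lemma ipZl {H : Hilbert} r (x y : H) : ip (vscal (rs r) x) y = r * ip x y.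
Proof. unfold ip. rewrite innerZ. simpl. ring. Qed.
Lemma ipZr {H : Hilbert} r (x y : H) : ip y (vscal (rs r) x) = r * ip y x.
Proof. rewrite !(ip_sym y). apply ipZl. Qed.
Lemma im_self {H : Hilbert} (x : H) : im (inner x x) = 0.
Proof. pose proof (f_equal im (inner_conj _ x x)). destruct (inner x x); simpl in *; lra. Qed.
Lemma ip_pos {H : Hilbert} (x : H) : 0 <= ip x x.
Proof. apply inner_pos. Qed.
Lemma hnorm_sq {H : Hilbert} (x : H) : hnorm x * hnorm x = ip x x.
Proof. apply sqrt_sqrt, inner_pos. Qed.
Lemma hnorm_ge0 {H : Hilbert} (x : H) : 0 <= hnorm x.
Proof. apply sqrt_pos. Qed.
Lemma hnorm_eq0 {H : Hilbert} (x : H) : hnorm x = 0 -> x = vzero.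
Proof. intros E. apply inner_def. pose proof (im_self x).
  assert (re (inner x x) = 0). { apply sqrt_eq_0; [apply inner_pos| exact E]. }
  apply C_ext; simpl; auto. Qed.
Lemma hnorm_scal {H : Hilbert} a (x : H) :
  hnorm (vscal a x) = sqrt (re a * re a + im a * im a) * hnorm x.
Proof. unfold hnorm. rewrite <- sqrt_mult.
  - f_equal. rewrite innerZ, (inner_conj _ (vscal a x) x), innerZ.
    pose proof (im_self x). destruct a as [a1 a2]; destruct (inner x x) as [p q].
    simpl in *. subst q. ring.
  - nra.
  - apply inner_pos. Qed.
Lemma hnorm_rscal {H : Hilbert} r (x : H) : hnorm (vscal (rs r) x) = Rabs r * hnorm x.
Proof. rewrite hnorm_scal. simpl. replace (r * r + 0 * 0) with (Rsqr r) by (unfold Rsqr; ring).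
  rewrite sqrt_Rsqr_abs. reflexivity. Qed.
Lemma hnorm_opp {H : Hilbert} (x : H) : hnorm (vopp x) = hnorm x.
Proof. rewrite oppE, hnorm_rscal. replace (Rabs (-1)) with 1 by (rewrite Rabs_left; lra). ring. Qed.
Lemma hnorm0 {H : Hilbert} : hnorm (@vzero H) = 0.
Proof. rewrite <- (scal0 vzero). change C0 with (rs 0). rewrite hnorm_rscal, Rabs_R0. ring. Qed.
Lemma ip_zero_r {H : Hilbert} (x : H) : ip x vzero = 0.
Proof. rewrite <- (scal0 vzero). change C0 with (rs 0). rewrite ipZr. ring. Qed.

Lemma CS {H : Hilbert} (x y : H) : ip x y <= hnorm x * hnorm y.
Proof.
  assert (Q : forall t, 0 <= ip x x + 2 * t * ip x y + t * t * ip y y).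
  { intro t. pose proof (ip_pos (vadd x (vscal (rs t) y))).
    rewrite ipDl, !ipDr, !ipZl, !ipZr, (ip_sym y x) in H0. lra. }
  assert (B : ip x y * ip x y <= ip x x * ip y y).
  { destruct (Req_dec (ip y y) 0) as [E|E].
    - assert (y = vzero). { apply hnorm_eq0. unfold hnorm. fold (ip y y). rewrite E. apply sqrt_0. }
      subst y. rewrite ip_zero_r. nra.
    - pose proof (ip_pos y). pose proof (Q (- ip x y / ip y y)).
      assert (0 < ip y y) by lra.
      replace (ip x x + 2 * (- ip x y / ip y y) * ip x y + - ip x y / ip y y * (- ip x y / ip y y) * ip y y)
        with ((ip x x * ip y y - ip x y * ip x y) / ip y y) in H1 by (field; lra).
      apply Rmult_le_compat_r with (r := ip y y) in H1; [|lra].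
      unfold Rdiv in H1. rewrite Rmult_assoc, Rinv_l, Rmult_1_r, Rmult_0_l in H1; lra. }
  rewrite <- (hnorm_sq x), <- (hnorm_sq y) in B.
  pose proof (hnorm_ge0 x); pose proof (hnorm_ge0 y).
  destruct (Rle_dec (ip x y) 0); [nra|].
  apply Rsqr_incr_0_var; unfold Rsqr; nra. Qed.

Lemma hnorm_tri {H : Hilbert} (x y : H) : hnorm (vadd x y) <= hnorm x + hnorm y.
Proof. pose proof (CS x y). pose proof (hnorm_ge0 x); pose proof (hnorm_ge0 y).
  pose proof (hnorm_ge0 (vadd x y)).
  assert (hnorm (vadd x y) * hnorm (vadd x y) <= (hnorm x + hnorm y) * (hnorm x + hnorm y)).
  { rewrite hnorm_sq, ipDl, !ipDr, (ip_sym y x).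
    pose proof (hnorm_sq x); pose proof (hnorm_sq y). nra. }
  apply Rsqr_incr_0_var; unfold Rsqr; nra. Qed.

Lemma hdist_sym {H : Hilbert} (x y : H) : hdist x y = hdist y x.
Proof. unfold hdist. rewrite hsub_opp, hnorm_opp. reflexivity. Qed.
Lemma hdist_tri {H : Hilbert} (x y z : H) : hdist x z <= hdist x y + hdist y z.
Proof. unfold hdist. rewrite (hsub_chain x y z). apply hnorm_tri. Qed.
Lemma hdist_self {H : Hilbert} (x : H) : hdist x x = 0.
Proof. unfold hdist. rewrite hsub_self. apply hnorm0. Qed.
Lemma hdist0 {H : Hilbert} (x : H) : hdist x vzero = hnorm x.
Proof. unfold hdist. rewrite hsub0. reflexivity. Qed.
Lemma hdist_ge0 {H : Hilbert} (x y : H) : 0 <= hdist x y.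
Proof. apply hnorm_ge0. Qed.
Lemma hdist_eq0 {H : Hilbert} (x y : H) : hdist x y = 0 -> x = y.
Proof. intros E. apply hsub_eq0, hnorm_eq0, E. Qed.

Lemma nat_above x : exists n, x <= INR n.
Proof. destruct (archimed x) as [H1 _]. destruct (Z_le_gt_dec 0 (up x)) as [h|h].
  - exists (Z.to_nat (up x)). rewrite INR_IZR_INZ, Z2Nat.id by lia; lra.
  - exists 0%nat. simpl. assert (IZR (up x) <= -1) by (apply IZR_le; lia). lra. Qed.

Lemma conv_ext {H : Hilbert} (u v : nat -> H) x :
  (forall n, u n = v n) -> converges u x -> converges v x.
Proof. intros E C eps He. destruct (C eps He) as [N HN]. exists N; intros n Hn.
  rewrite <- E. auto. Qed.

Lemma conv_add {H : Hilbert} (u v : nat -> H) x y :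
  converges u x -> converges v y -> converges (fun n => vadd (u n) (v n)) (vadd x y).
Proof. intros Cu Cv eps He.
  destruct (Cu (eps/2)) as [N1 H1]; [lra|]. destruct (Cv (eps/2)) as [N2 H2]; [lra|].
  exists (max N1 N2). intros n Hn. unfold hdist. rewrite hsubD.
  eapply Rle_lt_trans; [apply hnorm_tri|].
  specialize (H1 n ltac:(lia)); specialize (H2 n ltac:(lia)). unfold hdist in *. lra. Qed.

Lemma conv_scal {H : Hilbert} (u : nat -> H) x a :
  converges u x -> converges (fun n => vscal a (u n)) (vscal a x).
Proof. intros Cu eps He. set (c := sqrt (re a * re a + im a * im a)).
  assert (0 <= c) by apply sqrt_pos.
  destruct (Cu (eps / (c + 1))) as [N HN]. { apply Rdiv_lt_0_compat; lra. }
  exists N. intros n Hn. unfold hdist. rewrite <- hsub_scal, hnorm_scal. fold c.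
  specialize (HN n Hn). unfold hdist in HN.
  pose proof (hnorm_ge0 (hsub (u n) x)).
  apply Rmult_lt_compat_r with (r := c + 1) in HN; [|lra].
  unfold Rdiv in HN. rewrite Rmult_assoc, Rinv_l, Rmult_1_r in HN; nra. Qed.

Lemma ball_limit {H : Hilbert} (u : nat -> H) x c r :
  converges u x -> (forall n, hdist (u n) c <= r) -> hdist x c <= r.
Proof. intros Cu B. apply Rnot_lt_le. intro Hlt.
  destruct (Cu (hdist x c - r)) as [N HN]; [lra|].
  specialize (HN N (le_n _)). pose proof (hdist_tri x (u N) c). rewrite hdist_sym in HN.
  specialize (B N). lra. Qed.

Lemma completeK {H : Hilbert} (u : nat -> H) :
  (forall eps, eps > 0 -> exists N, forall m n, (N <= m)%nat -> (N <= n)%nat ->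
        hdist (u m) (u n) < eps) -> exists l, converges u l.
Proof. intros C. apply (complete H u C). Qed.

Lemma lin0 {H K : Hilbert} (T : op H K) : linear_op T -> app T vzero = vzero.
Proof. intros (D0 & DA & DS & LA & LS).
  apply (add_cancel_l (app T vzero)). rewrite vadd0, <- LA; auto. rewrite vadd0; auto. Qed.
Lemma lin_scal {H K : Hilbert} (T : op H K) a x : linear_op T -> dom T x ->
  dom T (vscal a x) /\ app T (vscal a x) = vscal a (app T x).
Proof. intros (D0 & DA & DS & LA & LS) Hx. auto. Qed.
Lemma lin_add {H K : Hilbert} (T : op H K) x y : linear_op T -> dom T x -> dom T y ->
  dom T (vadd x y) /\ app T (vadd x y) = vadd (app T x) (app T y).
Proof. intros (D0 & DA & DS & LA & LS) Hx Hy. auto. Qed.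
Lemma lin_opp {H K : Hilbert} (T : op H K) x : linear_op T -> dom T x ->
  dom T (vopp x) /\ app T (vopp x) = vopp (app T x).
Proof. intros L Hx. rewrite !oppE. apply lin_scal; auto. Qed.
Lemma lin_sub {H K : Hilbert} (T : op H K) x y : linear_op T -> dom T x -> dom T y ->
  dom T (hsub x y) /\ app T (hsub x y) = hsub (app T x) (app T y).
Proof. intros L Hx Hy. destruct (lin_opp T y L Hy) as [D1 E1]. unfold hsub.
  destruct (lin_add T x (vopp y) L Hx D1) as [D2 E2]. rewrite E2, E1. auto. Qed.
Lemma lin_dom0 {H K : Hilbert} (T : op H K) : linear_op T -> dom T vzero.
Proof. intros (D0 & _). exact D0. Qed.

Lemma inj_iff {H K : Hilbert} (T : op H K) : linear_op T ->
  (op_injective T <-> forall x, dom T x -> app T x = vzero -> x = vzero).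
Proof. intros L. split.
  - intros I x Hx E. apply I; auto. apply lin_dom0; auto. rewrite lin0; auto.
  - intros Z x y Hx Hy E. apply hsub_eq0. destruct (lin_sub T x y L Hx Hy) as [D1 E1].
    apply Z; auto. rewrite E1, E. apply hsub_self. Qed.

Definition Qstep {K : Hilbert} (L : op K K) (n : nat) (c : K) (r : R) (p : K * R) : Prop :=
  0 < snd p /\ snd p <= r / 2 /\
  forall w, hdist w (fst p) <= snd p ->
    hdist w c <= r /\ (forall y, dom L y -> hnorm y <= INR n -> app L y <> w).

Fixpoint bseq {K : Hilbert} (g : nat -> K -> R -> K * R) (k : nat) : K * R :=
  match k with
  | O => (vzero, 1)
  | S k => g k (fst (bseq g k)) (snd (bseq g k))
  end.

Lemma half_pow_small eps : 0 < eps -> exists N, forall n, (N <= n)%nat -> (1/2)^n < eps.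
Proof. intros He. destruct (pow_lt_1_zero (1/2)) with (y := eps) as [N HN].
  - rewrite Rabs_right; lra.
  - exact He.
  - exists N. intros n Hn. specialize (HN n Hn). rewrite Rabs_right in HN; auto.
    apply Rle_ge, pow_le; lra. Qed.

Lemma baire_contra {K : Hilbert} (L : op K K) (g : nat -> K -> R -> K * R) :
  (forall z, range L z) -> (forall n c r, 0 < r -> Qstep L n c r (g n c r)) -> False.
Proof.
  intros Sur G.
  set (c := fun k => fst (bseq g k)). set (r := fun k => snd (bseq g k)).
  assert (F1 : forall k, 0 < r k /\ Qstep L k (c k) (r k) (bseq g (S k))).
  { induction k as [|k IH].
    - assert (0 < r 0%nat) by (unfold r; simpl; lra). split; [auto| apply G; auto].
    - destruct IH as [P Q]. destruct Q as [Q1 _]. split; [exact Q1|]. apply G. exact Q1. }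
  assert (F2 : forall k, r k <= (1/2)^k).
  { induction k as [|k IH]. - unfold r; simpl; lra.
    - destruct (F1 k) as [_ [_ [Q2 _]]]. change (r (S k) <= 1/2 * (1/2)^k).
      unfold r in *. lra. }
  assert (F3 : forall j k w, hdist w (c (k + j)%nat) <= r (k + j)%nat -> hdist w (c k) <= r k).
  { induction j as [|j IH]; intros k w Hw.
    - rewrite Nat.add_0_r in Hw; exact Hw.
    - rewrite Nat.add_succ_r in Hw. apply IH.
      destruct (F1 (k + j)%nat) as [_ [_ [_ Q3]]]. apply Q3. exact Hw. }
  assert (F4 : forall k m, (k <= m)%nat -> hdist (c m) (c k) <= r k).
  { intros k m Hkm. replace m with (k + (m - k))%nat by lia. apply (F3 (m - k)%nat).
    rewrite hdist_self. left. apply F1. }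
  destruct (completeK c) as [l Hl].
  { intros eps He. destruct (half_pow_small (eps/2)) as [N HN]; [lra|].
    exists N. intros m n Hm Hn. pose proof (hdist_tri (c m) (c N) (c n)).
    rewrite (hdist_sym (c N)) in H. pose proof (F4 N m Hm). pose proof (F4 N n Hn).
    pose proof (F2 N). specialize (HN N (le_n _)). lra. }
  assert (F5 : forall k, hdist l (c k) <= r k).
  { intros k. apply Rnot_lt_le. intro Hlt.
    destruct (Hl (hdist l (c k) - r k)) as [N HN]; [lra|].
    specialize (HN (max N k) ltac:(lia)). pose proof (F4 k (max N k) ltac:(lia)).
    pose proof (hdist_tri l (c (max N k)) (c k)). rewrite hdist_sym in HN. lra. }
  destruct (Sur l) as [y [Hy Ey]].
  destruct (nat_above (hnorm y)) as [n Hn].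
  destruct (F1 n) as [_ [_ [_ Q3]]]. destruct (Q3 l (F5 (S n))) as [_ Q4].
  exact (Q4 y Hy Hn Ey).
Qed.

Lemma baire_step {K : Hilbert} (L : op K K) : (forall z, range L z) ->
  exists (n : nat) (z0 : K) (r : R), 0 < r /\
    forall z, hdist z z0 < r -> forall eps, eps > 0 ->
      exists y, dom L y /\ hnorm y <= INR n /\ hdist z (app L y) < eps.
Proof.
  intros Sur. apply NNPP. intro Hn.
  assert (G : forall n c r, exists p, 0 < r -> Qstep L n c r p).
  { intros n c r. destruct (Rlt_dec 0 r) as [Hr|Hr]; [|exists (c, r); intro; lra].
    assert (E : exists z, hdist z c < r /\ exists eps, eps > 0 /\
              forall y, dom L y -> hnorm y <= INR n -> eps <= hdist z (app L y)).
    { apply NNPP; intro Hc; apply Hn; exists n, c, r; split; auto.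
      intros z Hz eps He; apply NNPP; intro Hy; apply Hc; exists z; split; auto.
      exists eps; split; auto. intros y Hd Hb. apply Rnot_lt_le; intro Hlt.
      apply Hy; exists y; auto. }
    destruct E as [z [Hz [eps [He Hy]]]].
    exists (z, Rmin eps (r - hdist z c) / 2). intros _. unfold Qstep; simpl.
    assert (0 < Rmin eps (r - hdist z c)) by (apply Rmin_pos; lra).
    pose proof (Rmin_l eps (r - hdist z c)). pose proof (Rmin_r eps (r - hdist z c)).
    pose proof (hdist_ge0 z c). split; [lra|]. split; [lra|]. intros w Hw. split.
    - pose proof (hdist_tri w z c). lra.
    - intros y Hd Hb E. subst w. specialize (Hy y Hd Hb). rewrite hdist_sym in Hw. lra. }
  apply (baire_contra L (fun n c r => proj1_sig (constructive_indefinite_description _ (G n c r)))).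
  - exact Sur.
  - intros n c r Hr. apply (proj2_sig (constructive_indefinite_description _ (G n c r))). exact Hr.
Qed.

Lemma hsub_addl {H : Hilbert} (a b : H) : hsub (vadd a b) a = b.
Proof. unfold hsub. rewrite (vaddC _ a b), <- vaddA, vaddN, vadd0. reflexivity. Qed.

Lemma ident1 {H : Hilbert} (z0 z a b : H) :
  hsub z (hsub a b) = vadd (hsub (vadd z0 z) a) (vopp (hsub z0 b)).
Proof. unfold hsub. rewrite !oppD, !oppK.
  rewrite (vaddC _ (vopp z0) b). rewrite <- !vaddA.
  rewrite (vaddC _ z0 (vadd z _)). rewrite <- !vaddA. rewrite addNl, vadd0. reflexivity. Qed.

Lemma ident2 {H : Hilbert} (a b c : H) : vadd (vadd a b) (hsub c b) = vadd a c.
Proof. unfold hsub. rewrite <- vaddA. f_equal. rewrite vaddC, <- vaddA, addNl, vadd0. reflexivity. Qed.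

Lemma ident3 {H : Hilbert} (a b c : H) : hsub (vadd a b) c = vadd (hsub a c) b.
Proof. unfold hsub. rewrite <- !vaddA. f_equal. apply vaddC. Qed.

Lemma ident4 {H : Hilbert} (a b : H) : hsub a (vadd a b) = vopp b.
Proof. rewrite hsub_opp, hsub_addl. reflexivity. Qed.

Lemma bit_half {K : Hilbert} (L : op K K) n z0 r : linear_op L -> 0 < r ->
  (forall z, hdist z z0 < r -> forall eps, eps > 0 ->
      exists y, dom L y /\ hnorm y <= INR n /\ hdist z (app L y) < eps) ->
  forall z, hnorm z < r -> forall eps, eps > 0 ->
      exists y, dom L y /\ hnorm y <= 2 * INR n /\ hdist z (app L y) < eps.
Proof. intros Lin Hr Hb z Hz eps He.
  destruct (Hb (vadd z0 z)) with (eps := eps/2) as [y1 [D1 [N1 E1]]].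
  { unfold hdist. rewrite hsub_addl. exact Hz. } { lra. }
  destruct (Hb z0) with (eps := eps/2) as [y2 [D2 [N2 E2]]].
  { rewrite hdist_self. exact Hr. } { lra. }
  destruct (lin_sub L y1 y2 Lin D1 D2) as [D3 E3].
  exists (hsub y1 y2). split; [exact D3|]. split.
  - unfold hsub. eapply Rle_trans; [apply hnorm_tri|]. rewrite hnorm_opp. lra.
  - rewrite E3. unfold hdist. rewrite (ident1 z0). eapply Rle_lt_trans; [apply hnorm_tri|].
    rewrite hnorm_opp. unfold hdist in *. lra.
Qed.

Lemma bit_scale {K : Hilbert} (L : op K K) (N0 r : R) : linear_op L -> 0 < r -> 0 <= N0 ->
  (forall z, hnorm z < r -> forall eps, eps > 0 ->
      exists y, dom L y /\ hnorm y <= N0 /\ hdist z (app L y) < eps) ->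
  forall z eps, eps > 0 ->
      exists y, dom L y /\ hnorm y <= (2 * N0 / r) * hnorm z /\ hnorm (hsub z (app L y)) < eps.
Proof. intros Lin Hr HN Hb z eps He.
  pose proof (hnorm_ge0 z) as Hz0.
  destruct (Req_dec (hnorm z) 0) as [Z|Z].
  - apply hnorm_eq0 in Z. subst z. exists vzero. split; [apply lin_dom0; auto|].
    rewrite lin0 by auto. rewrite hsub_self, hnorm0. split; lra.
  - set (s := r / (2 * hnorm z)). assert (Hs : 0 < s) by (unfold s; apply Rdiv_lt_0_compat; lra).
    destruct (Hb (vscal (rs s) z)) with (eps := s * eps) as [y' [D1 [N1 E1]]].
    { rewrite hnorm_rscal, Rabs_right by lra. unfold s. field_simplify; lra. }
    { nra. }
    destruct (lin_scal L (rs (/ s)) y' Lin D1) as [D2 E2].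
    exists (vscal (rs (/ s)) y'). split; [exact D2|]. split.
    + rewrite hnorm_rscal, Rabs_right by (apply Rle_ge; left; apply Rinv_0_lt_compat; lra).
      replace (2 * N0 / r * hnorm z) with (/ s * N0) by (unfold s; field; lra).
      apply Rmult_le_compat_l; [left; apply Rinv_0_lt_compat; lra| exact N1].
    + rewrite E2. replace z with (vscal (rs (/ s)) (vscal (rs s) z)) at 1.
      * rewrite <- hsub_scal, hnorm_rscal, Rabs_right by (apply Rle_ge; left; apply Rinv_0_lt_compat; lra).
        unfold hdist in E1. apply Rmult_lt_compat_l with (r := / s) in E1;
          [|apply Rinv_0_lt_compat; lra].
        replace (/ s * (s * eps)) with eps in E1 by (field; lra). exact E1.
      * rewrite vscalA. replace (Cmul (rs (/ s)) (rs s)) with C1. { apply vscal1. }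
        apply C_ext; unfold rs, C1; simpl; field; lra.
Qed.

Fixpoint remseq {K : Hilbert} (L : op K K) (h : K -> nat -> K) (z : K) (k : nat) : K :=
  match k with
  | O => z
  | S k => hsub (remseq L h z k) (app L (h (remseq L h z k) k))
  end.

Fixpoint psum {K : Hilbert} (f : nat -> K) (k : nat) : K :=
  match k with
  | O => vzero
  | S k => vadd (psum f k) (f k)
  end.

Lemma lt_div_mul a b c : 0 < c -> a < b / c -> a * c < b.
Proof. intros Hc Hab. apply Rmult_lt_compat_r with (r := c) in Hab; [|exact Hc].
  replace (b / c * c) with b in Hab by (field; lra). exact Hab. Qed.

Lemma bit_iter {K : Hilbert} (L : op K K) M0 : linear_op L -> closed_op L -> op_injective L ->
  0 <= M0 ->
  (forall z eps, eps > 0 ->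
      exists y, dom L y /\ hnorm y <= M0 * hnorm z /\ hnorm (hsub z (app L y)) < eps) ->
  forall y, dom L y -> hnorm y <= 2 * M0 * hnorm (app L y).
Proof.
  intros Lin Cl Inj HM HQ y Hy. set (z := app L y).
  pose proof (hnorm_ge0 z) as Hz0.
  destruct (Req_dec (hnorm z) 0) as [Z|Z].
  { apply hnorm_eq0 in Z. assert (y = vzero).
    { apply Inj; auto. apply lin_dom0; auto. rewrite lin0; auto. }
    subst y. rewrite hnorm0. nra. }
  set (d := hnorm z). assert (Hd : 0 < d) by (unfold d; lra).
  assert (G : forall e k, exists y, dom L y /\ hnorm y <= M0 * hnorm e /\
             hnorm (hsub e (app L y)) < d * (1/2) ^ (S k)).
  { intros e k. apply HQ. apply Rmult_lt_0_compat; [lra|apply pow_lt; lra]. }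
  set (h := fun e k => proj1_sig (constructive_indefinite_description _ (G e k))).
  assert (Hh : forall e k, dom L (h e k) /\ hnorm (h e k) <= M0 * hnorm e /\
             hnorm (hsub e (app L (h e k))) < d * (1/2) ^ (S k)).
  { intros e k. exact (proj2_sig (constructive_indefinite_description _ (G e k))). }
  clearbody h. clear G.
  set (rm := remseq L h z). set (yk := fun k => h (rm k) k). set (ps := psum yk).
  assert (R1 : forall k, hnorm (rm k) <= d * (1/2) ^ k).
  { intros [|k]. - simpl. rewrite Rmult_1_r. apply Rle_refl.
    - simpl. destruct (Hh (rm k) k) as [_ [_ E]]. left. exact E. }
  assert (R2 : forall k, dom L (ps k) /\ vadd (app L (ps k)) (rm k) = z).
  { induction k as [|k [IH1 IH2]].
    - change (dom L vzero /\ vadd (app L vzero) z = z). split; [apply lin_dom0; auto|]. rewrite lin0 by auto. apply add0l.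
    - destruct (Hh (rm k) k) as [D1 _].
      destruct (lin_add L (ps k) (yk k) Lin IH1 D1) as [D2 E2].
      split; [exact D2|]. change (vadd (app L (vadd (ps k) (yk k))) (hsub (rm k) (app L (yk k))) = z).
      rewrite E2, ident2. exact IH2. }
  assert (R3 : forall k j, hnorm (hsub (ps (k + j)%nat) (ps k)) <= 2 * M0 * d * ((1/2)^k - (1/2)^(k+j))).
  { intros k j. induction j as [|j IH].
    - rewrite Nat.add_0_r, hsub_self, hnorm0. lra.
    - rewrite Nat.add_succ_r. change (ps (S (k + j))) with (vadd (ps (k+j)%nat) (yk (k+j)%nat)).
      rewrite ident3. eapply Rle_trans; [apply hnorm_tri|].
      destruct (Hh (rm (k+j)%nat) (k+j)%nat) as [_ [N1 _]]. fold (yk (k+j)%nat) in N1.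
      pose proof (R1 (k+j)%nat). pose proof (pow_lt (1/2) (k+j) ltac:(lra)).
      simpl pow. nra. }
  assert (R3' : forall k m, (k <= m)%nat -> hdist (ps m) (ps k) <= 2 * M0 * d * (1/2)^k).
  { intros k m Hkm. replace m with (k + (m - k))%nat by lia. unfold hdist.
    eapply Rle_trans; [apply R3|]. pose proof (pow_lt (1/2) (k + (m-k)) ltac:(lra)).
    assert (0 <= 2 * M0 * d) by nra. nra. }
  destruct (completeK ps) as [x Hx].
  { intros eps He. destruct (half_pow_small (eps / (4 * M0 * d + 1))) as [N HN].
    { apply Rdiv_lt_0_compat; nra. }
    exists N. intros m n Hm Hn. pose proof (hdist_tri (ps m) (ps N) (ps n)).
    rewrite (hdist_sym (ps N)) in H. pose proof (R3' N m Hm). pose proof (R3' N n Hn).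
    specialize (HN N (le_n _)). pose proof (pow_lt (1/2) N ltac:(lra)).
    apply lt_div_mul in HN; [|nra]. nra. }
  assert (CL : converges (fun k => app L (ps k)) z).
  { intros eps He. destruct (half_pow_small (eps / d)) as [N HN].
    { apply Rdiv_lt_0_compat; lra. }
    exists N. intros n Hn. destruct (R2 n) as [_ E]. rewrite <- E.
    unfold hdist. rewrite ident4, hnorm_opp. specialize (HN n Hn). pose proof (R1 n).
    apply lt_div_mul in HN; [|lra]. nra. }
  destruct (Cl ps x z (fun k => proj1 (R2 k)) Hx CL) as [Dx Ex].
  assert (x = y). { apply Inj; auto. }
  subst x. rewrite <- (hdist0 y). apply (ball_limit ps); auto.
  intros n. replace (ps n) with (ps (0 + n)%nat) by reflexivity.
  unfold hdist. change vzero with (ps 0%nat). eapply Rle_trans; [apply R3|].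
  pose proof (pow_lt (1/2) n ltac:(lra)). simpl pow. change (hnorm (app L y)) with d. assert (0 <= 2 * M0 * d) by nra. nra.
Qed.

Lemma BIT {K : Hilbert} (L : op K K) : linear_op L -> closed_op L -> op_injective L ->
  (forall z, range L z) ->
  exists M, 0 <= M /\ forall y, dom L y -> hnorm y <= M * hnorm (app L y).
Proof.
  intros Lin Cl Inj Sur.
  destruct (baire_step L Sur) as [n [z0 [r [Hr Hb]]]].
  pose proof (bit_half L n z0 r Lin Hr Hb) as Hh.
  assert (0 <= 2 * INR n) by (pose proof (pos_INR n); lra).
  pose proof (bit_scale L (2 * INR n) r Lin Hr H Hh) as Hs.
  assert (0 <= 2 * (2 * INR n) / r) by (apply Rmult_le_pos; [lra| left; apply Rinv_0_lt_compat; lra]).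
  exists (2 * (2 * (2 * INR n) / r)). split; [lra|].
  apply bit_iter; auto.
Qed.

Lemma shift_linear {H : Hilbert} (A : op H H) lam : linear_op A -> linear_op (shift A lam).
Proof. intros Lin. pose proof Lin as (D0 & DA & DS & LA & LS).
  unfold shift. split; [exact D0|]. split; [exact DA|]. split; [exact DS|]. split; simpl.
  - intros x y Hx Hy. rewrite LA by auto. rewrite vscalDr. apply hsubD.
  - intros a x Hx. rewrite LS by auto. rewrite hsub_scal. f_equal. apply scalA_comm.
Qed.

Lemma hsub_addK {H : Hilbert} (a b : H) : vadd (hsub a b) b = a.
Proof. unfold hsub. rewrite <- vaddA, addNl, vadd0. reflexivity. Qed.
Lemma hsub_addr {H : Hilbert} (a b : H) : hsub (vadd a b) b = a.
Proof. unfold hsub. rewrite <- vaddA, vaddN, vadd0. reflexivity. Qed.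

Lemma shift_closed {H : Hilbert} (A : op H H) lam : closed_op A -> closed_op (shift A lam).
Proof. intros Cl u x y Du Cu Cy. simpl in *.
  assert (CA : converges (fun n => app A (u n)) (vadd y (vscal lam x))).
  { apply (conv_ext (fun n => vadd (hsub (app A (u n)) (vscal lam (u n))) (vscal lam (u n)))).
    - intros n. apply hsub_addK.
    - apply conv_add; auto. apply conv_scal; auto. }
  destruct (Cl u x _ Du Cu CA) as [Dx Ex]. split; auto. rewrite Ex. apply hsub_addr.
Qed.

Lemma ps_shift {H : Hilbert} (A : op H H) lam :
  point_spectrum A lam <-> exists x, dom A x /\ x <> vzero /\ app (shift A lam) x = vzero.
Proof. unfold point_spectrum; simpl. split.
  - intros [x [D [N E]]]. exists x. rewrite E. auto using hsub_self.
  - intros [x [D [N E]]]. exists x. auto using hsub_eq0. Qed.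

Lemma ps_transfer {H K : Hilbert} (A : op H H) (B : op K K) (T : op H K) lam :
  intertwining A B T -> op_injective T -> point_spectrum A lam -> point_spectrum B lam.
Proof. intros ((Lin & _ & _) & I1 & I2 & I3 & I4) Inj [x [D [N E]]].
  exists (app T x). split; [auto|]. split.
  - intro Z. apply N. apply Inj; auto. apply lin_dom0; auto. rewrite lin0; auto.
  - rewrite I4, E by auto. apply lin_scal; auto. Qed.

Lemma res_transfer {H K : Hilbert} (A : op H H) (B : op K K) (T : op H K) lam :
  closed_dd_operator A -> closed_dd_operator B -> intertwining A B T ->
  (forall y, range T y) -> (point_spectrum B lam -> point_spectrum A lam) ->
  resolvent_set A lam -> resolvent_set B lam.
Proof. intros (LA & CA & _) (LB & CB & _) IT Sur PS [InjA [SurA _]].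
  pose proof IT as ((LT & _ & _) & I1 & I2 & I3 & I4).
  assert (InjB : op_injective (shift B lam)).
  { apply inj_iff; [apply shift_linear; auto|]. intros y Dy Ey.
    apply NNPP; intro Ny. destruct (PS (proj2 (ps_shift B lam) (ex_intro _ y (conj Dy (conj Ny Ey)))))
      as [x [Dx [Nx Ex]]].
    apply Nx. apply (proj1 (inj_iff _ (shift_linear A lam LA)) InjA); auto.
    simpl. rewrite Ex. apply hsub_self. }
  assert (SurB : forall z, range (shift B lam) z).
  { intros z. destruct (Sur z) as [w [Dw Ew]]. destruct (SurA w) as [x [Dx Ex]].
    exists (app T x). split; [simpl; auto|]. simpl in *.
    rewrite I4 by auto. destruct (lin_scal T lam x LT (I1 x Dx)) as [Ds Es].
    rewrite <- Es. destruct (lin_sub T _ _ LT (I2 x Dx) Ds) as [_ E2]. rewrite <- E2, Ex. exact Ew. }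
  split; [exact InjB|]. split; [exact SurB|].
  apply BIT; auto. apply shift_linear; auto. apply shift_closed; auto.
Qed.

Theorem proposition3p21 (H K : Hilbert) (A : op H H) (B : op K K)
  (TAB : op H K) (TBA : op K H) :
  closed_dd_operator A -> closed_dd_operator B ->
  dashv_via A B TAB -> dashv_via B A TBA ->
  inverse_bounded_everywhere TAB -> inverse_bounded_everywhere TBA ->
  (forall lam, point_spectrum A lam <-> point_spectrum B lam) /\
  (forall lam, resolvent_set A lam <-> resolvent_set B lam) /\
  (forall lam, spectrum A lam <-> spectrum B lam).
Proof.
  intros HA HB [IAB [JAB _]] [IBA [JBA _]] [SAB _] [SBA _].
  assert (P : forall lam, point_spectrum A lam <-> point_spectrum B lam).
  { intros lam; split; [apply (ps_transfer A B TAB)|apply (ps_transfer B A TBA)]; auto. }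
  assert (R : forall lam, resolvent_set A lam <-> resolvent_set B lam).
  { intros lam; split.
    - apply (res_transfer A B TAB); auto. apply P.
    - apply (res_transfer B A TBA); auto. apply P. }
  split; [exact P|]. split; [exact R|].
  intros lam. unfold spectrum. rewrite R. tauto.
Qed.
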